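(* Let $n>2k$ and $\ell$ be integers with $k\ge\ell\ge 2$, $X=\{1,\dots,n\}$. Let $\mathcal F\subset\binom{X}{k}$ be a saturated intersecting family, let $\mathcal B=\mathcal B(\mathcal F)$, and let $t=\min\{|B|\colon B\in\mathcal B\}$. Assume $t\ge 2$ and $\tau(\mathcal B^{(\le\ell)})\ge 2$. Then $$|\mathcal B^{(\ell)}|\le t\cdot\ell\cdot k^{\ell-2}.$$
   Context: $\binom{X}{k}$ is the family of $k$-subsets of $X$. A family is intersecting if any two of its members intersect. For $\mathcal G\subset 2^X$, $\mathcal T(\mathcal G):=\{T\subset X\colon |T|\le k,\ T\cap G\neq\emptyset \text{ for all } G\in\mathcal G\}$. An intersecting family $\mathcal F\subset\binom{X}{k}$ is saturated if for every $G\in\binom{X}{k}\setminus\mathcal F$ the family $\mathcal F\cup\{G\}$ is not intersecting. $\mathcal B(\mathcal F)$ denotes the family of inclusion-minimal members of $\mathcal T(\mathcal F)$. For a family $\mathcal H$, $\mathcal H^{(i)}:=\{H\in\mathcal H\colon |H|=i\}$ and $\mathcal H^{(\le \ell)}:=\bigcup_{i=1}^{\ell}\mathcal H^{(i)}$. The covering number $\tau(\mathcal H)$ is the minimum size of a set $T$ with $T\cap H\neq\emptyset$ for all $H\in\mathcal H$ (so $\tau(\mathcal H)\ge 2$ means $\mathcal H$ is nonempty and no single element lies in all members of $\mathcal H$). *)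

(* Defs.v *)
From mathcomp Require Import all_boot.
Set Implicit Arguments. Unset Strict Implicit. Unset Printing Implicit Defensive.

(* Ground set X = {1..n} is modelled as 'I_n; families are sets of sets. *)
Section Defs.
Variable n : nat.
Local Notation fam := {set {set 'I_n}}.

Definition ksets (k : nat) : fam := [set A : {set 'I_n} | #|A| == k].

Definition intersecting (F : fam) : Prop :=
  forall A B, A \in F -> B \in F -> A :&: B != set0.

Definition saturated (k : nat) (F : fam) : Prop :=
  F \subset ksets k /\ intersecting F /\
  forall G, G \in ksets k -> G \notin F -> ~ intersecting (G |: F).

Definition transv (k : nat) (G : fam) : fam :=
  [set T : {set 'I_n} | (#|T| <= k) && [forall A in G, T :&: A != set0]].

Definition minTransv (k : nat) (F : fam) : fam :=
  [set T : {set 'I_n} | minset (fun S => S \in transv k F) T].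

Definition layer (H : fam) (i : nat) : fam := [set A in H | #|A| == i].
Definition layer_le (H : fam) (l : nat) : fam :=
  [set A in H | (1 <= #|A| <= l)].

Definition tau_ge2 (H : fam) : Prop :=
  H != set0 /\ forall x : 'I_n, exists2 A, A \in H & x \notin A.
End Defs.

(* Main.v *)
Require Import Defs.
From mathcomp Require Import all_boot.
From mathcomp Require Import zify.
Set Implicit Arguments. Unset Strict Implicit.

Lemma card_bigcup_le (T I : finType) (A : {pred I}) (f : I -> {set T}) :
  #|\bigcup_(i in A) f i| <= \sum_(i in A) #|f i|.
Proof.
elim/big_rec2: _ => [|i m U _ leUm]; first by rewrite cards0.
by rewrite (leq_trans (leq_card_setU (f i) U).1) ?leq_add2l.
Qed.

Lemma ex_subset_card (T : finType) m (D : {set T}) :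
  m <= #|D| -> exists2 E : {set T}, E \subset D & #|E| = m.
Proof.
elim: m D => [|m IH] D hm; first by exists set0; rewrite ?sub0set ?cards0.
have: 0 < #|D| by lia.
case/card_gt0P => x xD.
have := cardsD1 x D; rewrite xD => hc.
have [E sE cE] := IH (D :\ x) ltac:(lia).
exists (x |: E).
  by rewrite subUset sub1set xD (subset_trans sE) // subD1set.
rewrite cardsU1 cE; have: x \notin E.
  by apply/negP => /(subsetP sE); rewrite !inE eqxx.
by move=> ->.
Qed.

Lemma transv_meet n k (F : {set {set 'I_n}}) B B' :
  2 * k < n -> 0 < k -> saturated k F ->
  B \in transv k F -> B' \in transv k F -> B :&: B' != set0.
Proof.
move=> hn hk [sF [iF satF]].
rewrite !inE => /andP[cB /forall_inP tB] /andP[cB' /forall_inP tB'].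
apply/negP => /eqP dis.
have sBc : B \subset ~: B'.
  apply/subsetP => x xB; rewrite inE; apply/negP => xB'.
  have h : x \in B :&: B' by rewrite inE xB xB'.
  by move: h; rewrite dis inE.
have cD : #|~: B' :\: B| = n - #|B'| - #|B|.
  rewrite cardsD (setIidPr sBc) cardsCs card_ord setCK.
  by [].
have [E sE cE] := ex_subset_card (m := k - #|B|) (D := ~: B' :\: B) ltac:(lia).
set G := B :|: E.
have cG : #|G| = k.
  rewrite /G cardsU.
  have -> : B :&: E = set0.
    apply/setP => x; rewrite !inE; apply/negP => /andP[xB xE].
    move: (subsetP sE x xE); by rewrite !inE xB.
  by rewrite cards0; lia.
have GT : forall A, A \in F -> G :&: A != set0.
  move=> A AF; apply: contraNneq (tB A AF) => h.
  rewrite -subset0; apply/subsetP => x; rewrite !inE => /andP[xB xA].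
  have h' : x \in G :&: A by rewrite !inE xB xA.
  by move: h'; rewrite h inE.
have GF : G \in F.
  apply/negPn/negP => GnF.
  apply: (satF G); first by rewrite inE cG.
    exact: GnF.
  move=> A C /setU1P[->|AF] /setU1P[->|CF].
  - rewrite setIid; apply/negP => /eqP G0; move: cG; rewrite G0 cards0; lia.
  - exact: GT.
  - by rewrite setIC; apply: GT.
  - exact: iF.
have := tB' G GF.
rewrite -subset0; case/negP; apply/subsetP => x; rewrite !inE => /andP[xB' xG].
case/orP: xG => [xB|xE].
  by move: (subsetP sBc x xB); rewrite inE xB'.
move: (subsetP sE x xE); rewrite !inE xB'. by rewrite andbF.
Qed.

Lemma count_le n k l (F : {set {set 'I_n}}) :
  l <= k -> F \subset ksets n k ->
  forall d (S : {set 'I_n}), l - #|S| = d -> #|S| <= l ->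
  #|[set B in layer (minTransv k F) l | S \subset B]| <= k ^ d.
Proof.
move=> hlk sF; elim => [|d IH] S hd hS.
  rewrite expn0 -(cards1 S); apply: subset_leq_card; apply/subsetP => B.
  rewrite !inE => /andP[/andP[_ /eqP cB] sSB]; apply/eqP/esym/eqP.
  by rewrite eqEcard sSB cB; lia.
set L := [set B in _ | _].
have [->|[B BL]] := set_0Vmem L; first by rewrite cards0.
move: (BL); rewrite !inE => /andP[/andP[mB /eqP cB] sSB].
have [tB minB] := minsetP mB.
have Snt : S \notin transv k F.
  apply/negP => tS; have := minB S tS sSB => eSB; move: hd; rewrite eSB cB; lia.
have hSk : #|S| <= k by lia.
move: Snt; rewrite inE negb_and hSk /=.
case/forall_inPn => A AF; rewrite negbK => /eqP SA.
have cA : #|A| = k by move: (subsetP sF A AF); rewrite inE => /eqP.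
have sub : L \subset \bigcup_(a in A) [set B in layer (minTransv k F) l | (a |: S) \subset B].
  apply/subsetP => B'; rewrite !inE => /andP[/andP[mB' cB'] sSB'].
  have := minsetp mB'; rewrite inE => /andP[_ /forall_inP /(_ A AF)].
  case/set0Pn => a; rewrite inE => /andP[aB' aA].
  apply/bigcupP; exists a => //; rewrite !inE mB' cB' /= subUset sub1set aB' sSB'.
  by [].
apply: (leq_trans (subset_leq_card sub)); apply: (leq_trans (card_bigcup_le _ _)).
rewrite expnS -cA -sum_nat_const; apply: leq_sum => a aA.
have aS : a \notin S.
  apply/negP => aS; have : a \in S :&: A by rewrite inE aS aA.
  by rewrite SA inE.
have cU : #|a |: S| = #|S|.+1 by rewrite cardsU1 aS.
rewrite cA; apply: IH; rewrite cU; lia.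
Qed.
Theorem lemma2p3 (n k l : nat) (F : {set {set 'I_n}}) (t : nat) :
  2 * k < n -> 2 <= l -> l <= k ->
  saturated k F ->
  (exists2 B, B \in minTransv k F & #|B| = t) ->
  (forall B, B \in minTransv k F -> t <= #|B|) ->
  2 <= t ->
  tau_ge2 (layer_le (minTransv k F) l) ->
  #|layer (minTransv k F) l| <= t * l * k ^ (l - 2).
Proof.
move=> hn hl hlk sat [B0 mB0 cB0] _ _ [_ tau].
have sat' := sat; case: sat' => [sF _].
have hk : 0 < k by lia.
set M := minTransv k F.
have Mt : forall B, B \in M -> B \in transv k F.
  by move=> B; rewrite inE => /minsetp.
pose B1 x := odflt set0 [pick A in layer_le M l | x \notin A].
have B1P : forall x, [/\ B1 x \in M, #|B1 x| <= l & x \notin B1 x].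
  move=> x; rewrite /B1; case: pickP => [A /andP[] | none] /=.
    by rewrite inE => /andP[AM /andP[_ ->]] ->.
  have [A AL xA] := tau x; have := none A; by rewrite AL xA.
pose C (S : {set 'I_n}) := [set B in layer M l | S \subset B].
have sub : layer M l \subset \bigcup_(x in B0) \bigcup_(y in B1 x) C [set x; y].
  apply/subsetP => B BL; move: (BL); rewrite inE => /andP[BM _].
  have := transv_meet hn hk sat (Mt _ mB0) (Mt _ BM).
  case/set0Pn => x; rewrite inE => /andP[xB0 xB].
  have [B1M _ _] := B1P x.
  have := transv_meet hn hk sat (Mt _ B1M) (Mt _ BM).
  case/set0Pn => y; rewrite inE => /andP[yB1 yB].
  apply/bigcupP; exists x => //; apply/bigcupP; exists y => //.
  by rewrite inE BL subUset !sub1set xB yB.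
apply: (leq_trans (subset_leq_card sub)); apply: (leq_trans (card_bigcup_le _ _)).
rewrite -mulnA -cB0 -sum_nat_const; apply: leq_sum => x xB0.
apply: (leq_trans (card_bigcup_le _ _)).
have [_ cB1 xB1] := B1P x.
apply: (@leq_trans (\sum_(y in B1 x) k ^ (l - 2))).
  apply: leq_sum => y yB1.
  have xy : x != y by apply/eqP => exy; move: yB1 xB1; rewrite -exy => ->.
  have c2 : #|[set x; y]| = 2 by rewrite cards2 xy.
  apply: (count_le hlk sF); rewrite c2 //.
by rewrite sum_nat_const leq_mul2r cB1 orbT.
Qed.
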